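(* Let $\mathfrak{g}$ be a finite-dimensional complex simple Lie algebra and $j\in I$. For every chamber weight $\gamma\in\Gamma$: - $\gamma\in\Gamma^j$ if and only if $\langle h_j,\gamma\rangle\le0$; - $\gamma\in\Gamma_j$ if and only if $\langle h_j,\gamma\rangle>0$.
   Context: $\mathfrak{g}$ has index set $I$, simple coroots $h_i$ and fundamental weights $\varpi_i$. $W$ is its Weyl group, with simple reflections $s_i$ and Bruhat order $<$. The chamber weights are $\Gamma=\{w\varpi_i:w\in W,i\in I\}$. Let $W_j^-=\{w\in W: s_jw<w\}$, set $\Gamma^j=\{w\varpi_i: w\in W_j^-, i\in I\}$, and set $\Gamma_j=\Gamma\setminus\Gamma^j$. *)

(* Defs.v *)
(* A finite-dimensional complex simple Lie algebra is represented
   by its Cartan matrix (Serre / Cartan–Killing classification). *)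
From mathcomp Require Import all_boot all_algebra.
From Stdlib Require Import Relations.
Set Implicit Arguments. Unset Strict Implicit. Unset Printing Implicit Defensive.
Import GRing.Theory Num.Theory.
Local Open Scope ring_scope.

(* Index set I = 'I_n ; Cartan matrix  C i j = <h_i, alpha_j>. *)
Definition finite_simple_cartan (n : nat) (C : 'I_n -> 'I_n -> int) : Prop :=
  (0 < n)%N /\
  (forall i, C i i = 2) /\
  (forall i j, i != j -> C i j <= 0) /\
  (forall i j, C i j = 0 <-> C j i = 0) /\
      (* symmetrizable with positive definite symmetrization (finite type) *)
      (exists d : 'I_n -> int,
          [/\ forall i, 0 < d i,
              forall i j, d i * C i j = d j * C j i &
              forall x : 'I_n -> rat, (exists i, x i != 0) ->
                0 < \sum_i \sum_j x i * ((d i * C i j)%:~R) * x j]) /\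
      (* indecomposable (simple rather than semisimple) *)
      (forall J : {set 'I_n},
          (forall a b, a \in J -> b \notin J -> C a b = 0) -> J = set0 \/ J = setT).

(* Integral weights, written in the basis of fundamental weights:
   lambda k = <h_k, lambda>. *)
Definition weight (n : nat) := {ffun 'I_n -> int}.

Definition fund (n : nat) (i : 'I_n) : weight n := [ffun k => if k == i then 1 else 0].

(* simple reflection s_i lambda = lambda - <h_i,lambda> alpha_i,
   where <h_k, alpha_i> = C k i *)
Definition sref (n : nat) (C : 'I_n -> 'I_n -> int) (i : 'I_n) (l : weight n) : weight n :=
  [ffun k => l k - l i * C k i].

(* A word [:: i1; ...; ik] represents s_{i1} ... s_{ik} in W. *)
Definition wact (n : nat) (C : 'I_n -> 'I_n -> int) (w : seq 'I_n) (l : weight n) : weight n :=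
  foldr (sref C) l w.

(* equality in the Weyl group (the action on the weight lattice is faithful) *)
Definition weq (n : nat) (C : 'I_n -> 'I_n -> int) (u v : seq 'I_n) : Prop :=
  forall l, wact C u l = wact C v l.

Definition wlen (n : nat) (C : 'I_n -> 'I_n -> int) (w : seq 'I_n) (k : nat) : Prop :=
  (exists u, size u = k /\ weq C u w) /\ (forall u, weq C u w -> (k <= size u)%N).

Definition is_refl (n : nat) (C : 'I_n -> 'I_n -> int) (t : seq 'I_n) : Prop :=
  exists (u : seq 'I_n) (i : 'I_n), weq C t (u ++ i :: rev u).

Definition bruhat_step (n : nat) (C : 'I_n -> 'I_n -> int) (x y : seq 'I_n) : Prop :=
  exists t, [/\ is_refl C t, weq C y (x ++ t) &
     exists kx ky, [/\ wlen C x kx, wlen C y ky & (kx < ky)%N]].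

Definition bruhat_lt (n : nat) (C : 'I_n -> 'I_n -> int) : relation (seq 'I_n) :=
  clos_trans _ (bruhat_step C).

Definition chamber (n : nat) (C : 'I_n -> 'I_n -> int) (g : weight n) : Prop :=
  exists (w : seq 'I_n) (i : 'I_n), g = wact C w (fund i).

Definition Gamma_up (n : nat) (C : 'I_n -> 'I_n -> int) (j : 'I_n) (g : weight n) : Prop :=
  exists (w : seq 'I_n) (i : 'I_n), bruhat_lt C (j :: w) w /\ g = wact C w (fund i).

Definition Gamma_low (n : nat) (C : 'I_n -> 'I_n -> int) (j : 'I_n) (g : weight n) : Prop :=
  chamber C g /\ ~ Gamma_up C j g.

(* Main.v *)
Require Import Defs.
From mathcomp Require Import all_boot all_algebra all_fingroup zify ring lra.
From Stdlib Require Import ClassicalEpsilon Relations.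
Import GRing.Theory Num.Theory.
Local Open Scope ring_scope.
Set Implicit Arguments. Unset Strict Implicit. Unset Printing Implicit Defensive.

Definition pb (P : Prop) : bool := if excluded_middle_informative P then true else false.
Lemma pbP P : reflect P (pb P).
Proof. rewrite /pb; case: excluded_middle_informative => h; constructor; done. Qed.

Fixpoint ea (b : bool) (k : nat) : seq bool :=
  match k with 0%N => [::] | k'.+1 => rcons (ea (~~ b) k') b end.

Definition fw (c1 c2 : int) (w : seq bool) (x y : int) : int * int :=
  foldr (fun b uv => if b then (- uv.1 - x - c2 * uv.2, uv.2)
                     else (uv.1, - uv.2 - y - c1 * uv.1)) (0, 0) w.

Definition fr (c1 c2 : int) (w : seq bool) (ab : int * int) : int * int :=
  foldr (fun b ab => if b then (- ab.1 - c1 * ab.2, ab.2)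
                     else (ab.1, - ab.2 - c2 * ab.1)) ab w.

Definition six (c1 c2 : int) : Prop :=
  (c1 = 0 /\ c2 = 0) \/ (c1 = -1 /\ c2 = -1) \/ (c1 = -1 /\ c2 = -2) \/
      (c1 = -2 /\ c2 = -1) \/ (c1 = -1 /\ c2 = -3) \/ (c1 = -3 /\ c2 = -1).

Lemma cases_ok c1 c2 : six c1 c2 ->
  exists m, [/\ (0 < m)%N,
   (forall x y, fw c1 c2 (ea false m) x y = fw c1 c2 (ea true m) x y) &
   (forall k, (k < m)%N -> 0 <= (fr c1 c2 (ea false k) (1, 0)).1 /\
                           0 <= (fr c1 c2 (ea false k) (1, 0)).2)].
Proof.
case=> [[-> ->]|[[-> ->]|[[-> ->]|[[-> ->]|[[-> ->]|[-> ->]]]]]].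
- exists 2%N; split => //; first by move=> x y /=; congr pair; ring.
  by case=> [|[|k]] //= _; split; lia.
- exists 3%N; split => //; first by move=> x y /=; congr pair; ring.
  by case=> [|[|[|k]]] //= _; split; lia.
- exists 4%N; split => //; first by move=> x y /=; congr pair; ring.
  by case=> [|[|[|[|k]]]] //= _; split; lia.
- exists 4%N; split => //; first by move=> x y /=; congr pair; ring.
  by case=> [|[|[|[|k]]]] //= _; split; lia.
- exists 6%N; split => //; first by move=> x y /=; congr pair; ring.
  by case=> [|[|[|[|[|[|k]]]]]] //= _; split; lia.
- exists 6%N; split => //; first by move=> x y /=; congr pair; ring.
  by case=> [|[|[|[|[|[|k]]]]]] //= _; split; lia.
Qed.

Section Main.
Variables (n : nat) (C : 'I_n -> 'I_n -> int).
Hypothesis C2 : forall i, C i i = 2.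

Lemma sref_invol i l : sref C i (sref C i l) = l.
Proof. apply/ffunP => k; rewrite !ffunE C2; ring. Qed.

Lemma wact_cat u v l : wact C (u ++ v) l = wact C u (wact C v l).
Proof. by rewrite /wact foldr_cat. Qed.

Lemma wact_rev_l w l : wact C (rev w) (wact C w l) = l.
Proof.
elim: w l => [|i w IH] l //=.
by rewrite rev_cons -cats1 wact_cat /= sref_invol IH.
Qed.

Lemma wact_rev_r w l : wact C w (wact C (rev w) l) = l.
Proof. by rewrite -{1}(revK w) wact_rev_l. Qed.

Lemma weq_refl u : weq C u u. Proof. by []. Qed.
Lemma weq_sym u v : weq C u v -> weq C v u. Proof. by move=> h l; rewrite h. Qed.
Lemma weq_trans u v w : weq C u v -> weq C v w -> weq C u w.
Proof. by move=> h1 h2 l; rewrite h1 h2. Qed.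
Lemma weq_cat u u' v v' : weq C u u' -> weq C v v' -> weq C (u ++ v) (u' ++ v').
Proof. by move=> h1 h2 l; rewrite !wact_cat h1 h2. Qed.
Lemma weq_cons i u u' : weq C u u' -> weq C (i :: u) (i :: u').
Proof. by move=> h l /=; rewrite h. Qed.
Lemma weq_rcons i u u' : weq C u u' -> weq C (rcons u i) (rcons u' i).
Proof. by move=> h; rewrite -!cats1; apply: weq_cat. Qed.
Lemma weq_ii i u : weq C (i :: i :: u) u.
Proof. by move=> l /=; rewrite sref_invol. Qed.
Lemma weq_rcons_ii i u : weq C (rcons (rcons u i) i) u.
Proof. by move=> l; rewrite -!cats1 -catA !wact_cat /= sref_invol. Qed.
Lemma weq_rev u v : weq C u v -> weq C (rev u) (rev v).
Proof.
move=> h l.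
by rewrite -{1}(wact_rev_r v l) -h wact_rev_l.
Qed.

Lemma Lw_exP w : exists k, pb (exists u, size u = k /\ weq C u w).
Proof. by exists (size w); apply/pbP; exists w. Qed.

Definition Lw w := ex_minn (Lw_exP w).

Lemma Lw_ex w : exists u, size u = Lw w /\ weq C u w.
Proof. by rewrite /Lw; case: ex_minnP => m /pbP. Qed.

Lemma Lw_le u w : weq C u w -> (Lw w <= size u)%N.
Proof. by rewrite /Lw; case: ex_minnP => m _ H h; apply: H; apply/pbP; exists u. Qed.

Lemma Lw_size w : (Lw w <= size w)%N.
Proof. exact: Lw_le. Qed.

Lemma Lw_weq u v : weq C u v -> Lw u = Lw v.
Proof.
move=> h; apply/eqP; rewrite eqn_leq.
have [a [sa ha]] := Lw_ex u; have [b [sb hb]] := Lw_ex v.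
apply/andP; split.
  by rewrite -sb; apply: Lw_le; apply: weq_trans hb (weq_sym h).
by rewrite -sa; apply: Lw_le; apply: weq_trans ha h.
Qed.

Lemma Lw_cat u v : (Lw (u ++ v) <= Lw u + Lw v)%N.
Proof.
have [a [sa ha]] := Lw_ex u; have [b [sb hb]] := Lw_ex v.
rewrite -sa -sb -size_cat; apply: Lw_le; exact: weq_cat.
Qed.

Lemma Lw_cons i u : (Lw (i :: u) <= (Lw u).+1)%N.
Proof. have := Lw_cat [:: i] u; have := Lw_size [:: i]; simpl; lia. Qed.

Lemma Lw_cons_ge i u : (Lw u <= (Lw (i :: u)).+1)%N.
Proof. by rewrite -(Lw_weq (weq_ii i u)) Lw_cons. Qed.

Lemma Lw_rcons i u : (Lw (rcons u i) <= (Lw u).+1)%N.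
Proof.
rewrite -cats1; have := Lw_cat u [:: i]; have := Lw_size [:: i]; simpl; lia.
Qed.

Lemma Lw_rcons_ge i u : (Lw u <= (Lw (rcons u i)).+1)%N.
Proof. by rewrite -(Lw_weq (weq_rcons_ii i u)) Lw_rcons. Qed.

Lemma Lw_rev u : Lw (rev u) = Lw u.
Proof.
suff H : forall u, (Lw (rev u) <= Lw u)%N.
  by apply/eqP; rewrite eqn_leq; apply/andP; split; [exact: H | rewrite -{1}(revK u); exact: H].
move=> w; have [a [sa ha]] := Lw_ex w.
by rewrite -sa -size_rev; apply: Lw_le; apply: weq_rev.
Qed.

Lemma wlenE w k : wlen C w k <-> k = Lw w.
Proof.
split.
  case=> [[u [su hu]] H]; apply/eqP; rewrite eqn_leq; apply/andP; split.
    by have [a [sa ha]] := Lw_ex w; rewrite -sa; apply: H.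
  by rewrite -su; exact: Lw_le hu.
move=> ->; split; first exact: Lw_ex.
by move=> u h; apply: Lw_le.
Qed.

Lemma sum_d (f : 'I_n -> int) a : \sum_b (b == a)%:R * f b = f a.
Proof.
rewrite (bigD1 a) //= eqxx mul1r big1 ?addr0 // => b /negbTE ->; by rewrite mul0r.
Qed.

Definition Ms i : 'M[int]_n := \matrix_(a, b) ((a == b)%:R - (b == i)%:R * C a i).
Definition colv (l : weight n) : 'cV[int]_n := \col_k l k.
Definition Mw (w : seq 'I_n) : 'M[int]_n := foldr (fun i M => Ms i *m M) 1%:M w.

Lemma Ms_act i l : Ms i *m colv l = colv (sref C i l).
Proof.
apply/matrixP => a z; rewrite !mxE ffunE.
under eq_bigr do rewrite !mxE mulrBl.
rewrite big_split /= sumrN.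
under eq_bigr do rewrite eq_sym.
rewrite sum_d.
under eq_bigr do rewrite -mulrA.
by rewrite sum_d mulrC.
Qed.

Lemma Mw_act w l : Mw w *m colv l = colv (wact C w l).
Proof.
elim: w => [|i w IH] /=; first by rewrite mul1mx.
by rewrite -mulmxA IH Ms_act.
Qed.

Lemma Mw_entry w a b : Mw w a b = wact C w (fund b) a.
Proof.
have := congr1 (fun M : 'cV[int]_n => M a ord0) (Mw_act w (fund b)).
rewrite !mxE /= => <-.
under eq_bigr do rewrite mxE ffunE.
rewrite (bigD1 b) //= eqxx mulr1 big1 ?addr0 // => c /negbTE ->; by rewrite mulr0.
Qed.

Lemma Mw_weq u v : weq C u v -> Mw u = Mw v.
Proof. by move=> h; apply/matrixP => a b; rewrite !Mw_entry h. Qed.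

Lemma det_onecol (A : 'M[int]_n) i :
  (forall a b, b != i -> A a b = (a == b)%:R) -> \det A = A i i.
Proof.
move=> HA; rewrite /determinant (bigD1 (1%g : {perm 'I_n})) //=.
rewrite odd_perm1 expr0 mul1r [X in _ + X]big1 ?addr0.
  rewrite (bigD1 i) //= perm1 big1 ?mulr1 // => a hai.
  by rewrite perm1 HA // eqxx.
move=> s hs.
case: (pickP (fun a => s a != a)) => [a Ha | H]; last first.
  case/negP: hs; apply/eqP/permP => x; rewrite perm1.
  by move: (H x) => /= /negbFE/eqP.
have [r [hr1 hr2]] : exists r, s r != r /\ s r != i.
  case: (eqVneq (s a) i) => hsa; last by exists a.
  exists i; split; last first.
    apply/negP => /eqP hsi; move/eqP: Ha; apply; apply: (@perm_inj _ s).
    by rewrite hsa hsi.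
  apply/negP => /eqP hsi; move/eqP: Ha; apply; apply: (@perm_inj _ s).
  by rewrite hsa hsi.
rewrite (bigD1 r) //= HA // eq_sym (negbTE hr1) mul0r mulr0 //.
Qed.

Lemma det_Ms i : \det (Ms i) = -1.
Proof.
rewrite (@det_onecol _ i).
  by rewrite !mxE eqxx C2.
by move=> a b hb; rewrite !mxE (negbTE hb) mul0r subr0.
Qed.

Lemma det_Mw w : \det (Mw w) = (-1) ^+ size w.
Proof.
elim: w => [|i w IH] /=; first by rewrite det1.
by rewrite det_mulmx IH det_Ms exprS.
Qed.

Lemma weq_odd u v : weq C u v -> odd (size u) = odd (size v).
Proof.
move=> h; have := congr1 determinant (Mw_weq h).
rewrite !det_Mw -signr_odd -[in RHS]signr_odd.
by move/signr_inj.
Qed.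

Definition rref i (x : weight n) : weight n :=
  [ffun k => x k - (k == i)%:R * \sum_l C l i * x l].
Definition ract (w : seq 'I_n) (x : weight n) : weight n := foldr rref x w.
Definition pair (x l : weight n) : int := \sum_k x k * l k.

Lemma rref_pair i x l : pair (rref i x) (sref C i l) = pair x l.
Proof.
rewrite /pair; set a := \sum_l C l i * x l.
have e : forall k, rref i x k * sref C i l k =
  x k * l k - l i * (C k i * x k) - (k == i)%:R * (a * l k)
  + (k == i)%:R * (a * l i * C k i).
  by move=> k; rewrite !ffunE; ring.
under eq_bigr do rewrite e.
rewrite big_split /= !sumrB !sum_d -mulr_sumr -/a C2; ring.
Qed.

Lemma rref_invol i x : rref i (rref i x) = x.
Proof.
apply/ffunP => k; rewrite !ffunE.
set a := \sum_l C l i * x l.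
have -> : \sum_l C l i * rref i x l = - a.
  under eq_bigr do rewrite ffunE mulrBr.
  rewrite sumrB.
  under [X in _ - X]eq_bigr do rewrite mulrCA.
  rewrite sum_d C2 -/a; ring.
ring.
Qed.

Lemma pair_sref i x l : pair x (sref C i l) = pair (rref i x) l.
Proof. by rewrite -{2}(sref_invol i l) rref_pair. Qed.

Lemma ract_rcons w i x : ract (rcons w i) x = ract w (rref i x).
Proof. by rewrite /ract -cats1 foldr_cat. Qed.

Lemma ract_cat u v x : ract (u ++ v) x = ract u (ract v x).
Proof. by rewrite /ract foldr_cat. Qed.

Lemma pair_wact w x l : pair x (wact C w l) = pair (ract (rev w) x) l.
Proof.
elim: w x => [|i w IH] x //=.
by rewrite pair_sref IH rev_cons ract_rcons.
Qed.

Lemma pair_fund_r x k : pair x (fund k) = x k.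
Proof.
rewrite /pair (bigD1 k) //= ffunE eqxx mulr1 big1 ?addr0 // => b hb.
by rewrite ffunE (negbTE hb) mulr0.
Qed.

Lemma pair_fund_l l k : pair (fund k) l = l k.
Proof.
rewrite /pair (bigD1 k) //= ffunE eqxx mul1r big1 ?addr0 // => b hb.
by rewrite ffunE (negbTE hb) mul0r.
Qed.

Lemma wact_coord w k j : wact C w (fund k) j = ract (rev w) (fund j) k.
Proof. by rewrite -pair_fund_l pair_wact pair_fund_r. Qed.

Lemma ract_weq_rev u v x : weq C u v -> ract (rev u) x = ract (rev v) x.
Proof.
move=> h; apply/ffunP => k.
by rewrite -!pair_fund_r -!pair_wact h.
Qed.

Lemma ract_lin w (a b : int) (x y : weight n) :
  ract w [ffun k => a * x k + b * y k] = [ffun k => a * ract w x k + b * ract w y k].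
Proof.
elim: w => [|i w IH] /=; first by apply/ffunP => k; rewrite !ffunE.
rewrite IH; apply/ffunP => k; rewrite !ffunE.
under eq_bigr do rewrite ffunE mulrDr mulrCA [X in _ + X]mulrCA.
rewrite big_split /= -!mulr_sumr; ring.
Qed.

Lemma rref_self i : rref i (fund i) = [ffun k => -1 * fund i k + 0 * fund i k].
Proof.
apply/ffunP => k; rewrite !ffunE.
under eq_bigr do rewrite ffunE.
rewrite (bigD1 i) //= eqxx mulr1 big1 ?addr0 ?C2; last first.
  by move=> b hb; rewrite (negbTE hb) mulr0.
by case: (k == i) => /=; rewrite ?C2; ring.
Qed.


Lemma fundE (i k : 'I_n) : fund i k = (k == i)%:R.
Proof. by rewrite ffunE; case: (k == i). Qed.

Lemma natr_if (b : bool) : (b%:R : int) = if b then 1 else 0.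
Proof. by case: b. Qed.

Lemma wact_cons i w l : wact C (i :: w) l = sref C i (wact C w l).
Proof. by []. Qed.
Lemma ract_cons i w x : ract (i :: w) x = rref i (ract w x).
Proof. by []. Qed.

Lemma size_ea b k : size (ea b k) = k.
Proof. by elim: k b => [|k IH] b //=; rewrite size_rcons IH. Qed.

Lemma ea_split m j b : ea b (j + m) = ea (iter m negb b) j ++ ea b m.
Proof.
elim: m b => [|m IH] b; first by rewrite addn0 cats0.
rewrite addnS [ea b _.+1]/= IH rcons_cat iterSr; congr (_ ++ _).
Qed.

Lemma alt_ea xb b : (forall p c q, xb <> p ++ c :: c :: q) ->
  (forall xb', xb <> rcons xb' (~~ b)) -> xb = ea b (size xb).
Proof.
elim/last_ind: xb b => [|xb c IH] b H1 H2 //.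
have hc : c = b.
  case: (eqVneq c b) => // hcb; exfalso; apply: (H2 xb); congr rcons.
  by move: hcb; clear H1 H2 IH; case: c; case: b.
move: H1 H2; rewrite hc => H1 H2; rewrite size_rcons /=; congr rcons; apply: IH.
  move=> p c0 q hx; apply: (H1 p c0 (rcons q b)); by rewrite hx rcons_cat.
move=> xb' hx; rewrite negbK in hx; apply: (H1 xb' b [::]).
by rewrite hx -!cats1 -catA.
Qed.

Section Dih.
Variables (s t : 'I_n).
Hypothesis hst : s != t.
Definition lett (b : bool) := if b then s else t.

Lemma fw_t c1 c2 w x y : fw c1 c2 (true :: w) x y =
  (- (fw c1 c2 w x y).1 - x - c2 * (fw c1 c2 w x y).2, (fw c1 c2 w x y).2).
Proof. by []. Qed.
Lemma fw_f c1 c2 w x y : fw c1 c2 (false :: w) x y =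
  ((fw c1 c2 w x y).1, - (fw c1 c2 w x y).2 - y - c1 * (fw c1 c2 w x y).1).
Proof. by []. Qed.
Lemma fr_t c1 c2 w ab : fr c1 c2 (true :: w) ab =
  (- (fr c1 c2 w ab).1 - c1 * (fr c1 c2 w ab).2, (fr c1 c2 w ab).2).
Proof. by []. Qed.
Lemma fr_f c1 c2 w ab : fr c1 c2 (false :: w) ab =
  ((fr c1 c2 w ab).1, - (fr c1 c2 w ab).2 - c2 * (fr c1 c2 w ab).1).
Proof. by []. Qed.

Lemma wact2 w l : wact C (map lett w) l =
  [ffun k => l k + (fw (C t s) (C s t) w (l s) (l t)).1 * C k s
                 + (fw (C t s) (C s t) w (l s) (l t)).2 * C k t].
Proof.
elim: w => [|b w IH]; first by apply/ffunP => k; rewrite ffunE /=; ring.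
rewrite map_cons wact_cons IH; apply/ffunP => k.
case: b; rewrite ?fw_t ?fw_f /= !ffunE ?C2; ring.
Qed.

Lemma sum_st (f : 'I_n -> int) a b :
  \sum_l f l * (a * fund s l + b * fund t l) = a * f s + b * f t.
Proof.
rewrite (eq_bigr (fun l => a * ((l == s)%:R * f l) + b * ((l == t)%:R * f l))); last first.
  by move=> l _; rewrite !fundE; ring.
by rewrite big_split /= -!mulr_sumr !sum_d.
Qed.

Lemma ract2 w a b : ract (map lett w) [ffun k => a * fund s k + b * fund t k] =
  [ffun k => (fr (C t s) (C s t) w (a, b)).1 * fund s k
           + (fr (C t s) (C s t) w (a, b)).2 * fund t k].
Proof.
elim: w => [|c w IH]; first by apply/ffunP => k; rewrite !ffunE.
rewrite map_cons ract_cons IH; apply/ffunP => k.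
case: c; rewrite ?fr_t ?fr_f /= !ffunE;
  under eq_bigr do rewrite ffunE;
  rewrite sum_st C2 ?fundE; case: (eqVneq k s) => [->|hks];
  rewrite ?eqxx ?(negbTE hst) ?(negbTE hks) //=;
  rewrite ?natr_if; ring.
Qed.


Hypothesis Hsix : six (C t s) (C s t).

Lemma dihedral xb :
 (forall yb, weq C (map lett yb) (map lett xb) -> (size xb <= size yb)%N) ->
 (forall yb, weq C (map lett yb) (rcons (map lett xb) s) -> (size xb < size yb)%N) ->
 exists a b, [/\ 0 <= a, 0 <= b &
   ract (map lett xb) (fund s) = [ffun k => a * fund s k + b * fund t k]].
Proof.
move=> H3 H4.
have H1 : forall p c q, xb <> p ++ c :: c :: q.
  move=> p c q hx.
  have h : weq C (map lett (p ++ q)) (map lett xb).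
    rewrite hx !map_cat /=; apply: weq_cat; first exact: weq_refl.
    exact: weq_sym (weq_ii _ _).
  have := H3 _ h; rewrite hx !size_cat /=; lia.
have H2 : forall xb', xb <> rcons xb' (~~ false).
  move=> xb' hx.
  have h : weq C (map lett xb') (rcons (map lett xb) s).
    rewrite hx map_rcons /=; exact: weq_sym (weq_rcons_ii _ _).
  have := H4 _ h; rewrite hx size_rcons; lia.
have hx := alt_ea H1 H2.
have [m [hm0 hbr hpos]] := cases_ok Hsix.
have hbw : weq C (map lett (ea false m)) (map lett (ea true m)).
  by move=> l; rewrite !wact2 hbr.
have hlt : (size xb < m)%N.
  rewrite ltnNge; apply/negP => hge.
  move: hx; set k := size xb => hx.
  destruct m as [|m']; first by [].
  have hk : k = (k - m'.+1 + m'.+1)%N by rewrite subnK.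
  set z := ea (iter m'.+1 negb false) (k - m'.+1) ++ ea false m'.
  have hz : weq C (map lett xb) (rcons (map lett z) s).
    rewrite hx hk ea_split map_cat /z map_cat rcons_cat.
    apply: weq_cat; first exact: weq_refl.
    apply: weq_trans hbw _; by rewrite /= map_rcons.
  have h : weq C (map lett z) (rcons (map lett xb) s).
    apply: weq_sym; apply: weq_trans (weq_rcons _ hz) _; exact: weq_rcons_ii.
  have := H4 _ h; rewrite /z size_cat !size_ea -/k; lia.
have fs : fund s = [ffun k => 1 * fund s k + 0 * fund t k].
  by apply/ffunP => k; rewrite !ffunE; ring.
have [p1 p2] := hpos _ hlt.
rewrite {1}fs ract2.
move: p1 p2; rewrite -hx => p1 p2.
by exists (fr (C t s) (C s t) xb (1, 0)).1, (fr (C t s) (C s t) xb (1, 0)).2; split.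
Qed.

End Dih.

Lemma ract_weq u v x : weq C u v -> ract u x = ract v x.
Proof.
move=> h; rewrite -(revK u) -(revK v); apply: ract_weq_rev; exact: weq_rev.
Qed.

Lemma Lw_rcons_neq w i : Lw (rcons w i) <> Lw w.
Proof.
have [a [sa ha]] := Lw_ex w; have [b [sb hb]] := Lw_ex (rcons w i).
have h : weq C b (rcons a i) := weq_trans hb (weq_rcons i (weq_sym ha)).
move/weq_odd: h; rewrite size_rcons /= sa sb => h e; rewrite e in h.
by move: h; case: (odd _).
Qed.

Lemma Lw_rcons_cases w i :
  Lw (rcons w i) = (Lw w).+1 \/ (Lw (rcons w i)).+1 = Lw w.
Proof.
have := Lw_rcons i w; have := Lw_rcons_ge i w; have := @Lw_rcons_neq w i; lia.
Qed.

Hypothesis HSIX : forall s t, s != t -> six (C t s) (C s t).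

Lemma Tstep w s :
  (0 < Lw w)%N ->
  (forall v s', (Lw v < Lw w)%N -> (Lw v < Lw (rcons v s'))%N ->
     forall k, 0 <= ract v (fund s') k) ->
  (Lw w < Lw (rcons w s))%N -> forall k, 0 <= ract w (fund s) k.
Proof.
move=> hm IHv hlt.
have [u [su hu]] := Lw_ex w.
case/lastP: u su hu => [|u0 t] su hu; first by rewrite -su in hm.
have hLw : Lw (rcons u0 t) = Lw w := Lw_weq hu.
have hu0 : (Lw u0).+1 = Lw w.
  have := Lw_size u0; have := Lw_rcons t u0; rewrite size_rcons in su; lia.
have hts : t != s.
  apply/negP => /eqP ets; move: hlt; rewrite ets in hu.
  rewrite -(Lw_weq (weq_rcons s hu)) (Lw_weq (weq_rcons_ii _ _)); lia.
pose A v xb := weq C (v ++ map (lett s t) xb) w /\ (Lw v + size xb)%N = Lw w.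
have exA : exists k, pb (exists v xb, A v xb /\ Lw v = k).
  exists (Lw u0); apply/pbP; exists u0, [:: false]; split => //; split => //=.
    by rewrite cats1.
  by rewrite addn1.
case: (ex_minnP exA) => k0 /pbP [v [xb [[hA1 hA2] hvk]]] hmin.
have hvlt : (Lw v < Lw w)%N.
  rewrite hvk -hu0 ltnS; apply: hmin; apply/pbP; exists u0, [:: false].
  by split => //; split => //=; [rewrite cats1 | rewrite addn1].
have hgrow : forall bc, (Lw v < Lw (rcons v (lett s t bc)))%N.
  move=> bc; set c := lett s t bc.
  case: (Lw_rcons_cases v c) => hc; first by rewrite hc.
  exfalso.
  have : (k0 <= Lw (rcons v c))%N.
    apply: hmin; apply/pbP; exists (rcons v c), (bc :: xb); split => //; split.
      rewrite cat_rcons /= -/c; apply: weq_trans hA1.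
      by apply: weq_cat; [exact: weq_refl | exact: weq_ii].
    by rewrite /= -hA2 -hc addnS.
  lia.
have ps := IHv v s hvlt (hgrow true).
have pt := IHv v t hvlt (hgrow false).
have H3 : forall yb, weq C (map (lett s t) yb) (map (lett s t) xb) ->
    (size xb <= size yb)%N.
  move=> yb h.
  have e : Lw (v ++ map (lett s t) yb) = Lw w.
    apply: Lw_weq; apply: weq_trans hA1; apply: weq_cat => //; exact: weq_refl.
  have := Lw_cat v (map (lett s t) yb); have := Lw_size (map (lett s t) yb).
  rewrite size_map e; lia.
have H4 : forall yb, weq C (map (lett s t) yb) (rcons (map (lett s t) xb) s) ->
    (size xb < size yb)%N.
  move=> yb h.
  have e : Lw (v ++ map (lett s t) yb) = Lw (rcons w s).
    apply: Lw_weq; apply: weq_trans _ (weq_rcons s hA1).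
    rewrite rcons_cat; apply: weq_cat => //; exact: weq_refl.
  have := Lw_cat v (map (lett s t) yb); have := Lw_size (map (lett s t) yb).
  rewrite size_map e; lia.
have hst : s != t by rewrite eq_sym.
have [a [b [ha hb he]]] := dihedral hst (HSIX hst) H3 H4.
move=> k.
rewrite (ract_weq _ (weq_sym hA1)) ract_cat he ract_lin ffunE.
by apply: addr_ge0; apply: mulr_ge0.
Qed.

Lemma Tmain N : forall w s, (Lw w <= N)%N -> (Lw w < Lw (rcons w s))%N ->
  forall k, 0 <= ract w (fund s) k.
Proof.
elim: N => [|N IH] w s hN hlt.
  have [u [su hu]] := Lw_ex w.
  have hw0 : Lw w = 0%N by lia.
  move: su; rewrite hw0; case: u hu => // hu _ k.
  rewrite -(ract_weq _ hu) /= ffunE; by case: (k == s).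
case: (posnP (Lw w)) => hw.
  have [u [su hu]] := Lw_ex w.
  move: su; rewrite hw; case: u hu => // hu _ k.
  rewrite -(ract_weq _ hu) /= ffunE; by case: (k == s).
apply: Tstep => // v s' hv; apply: IH; lia.
Qed.

Lemma key_pos w j : (Lw w < Lw (j :: w))%N -> forall k, 0 <= wact C w (fund k) j.
Proof.
move=> h k; rewrite wact_coord.
apply: (@Tmain (Lw (rev w))) => //.
by rewrite -rev_cons !Lw_rev.
Qed.

Lemma key_neg w j : (Lw (j :: w) < Lw w)%N -> forall k, wact C w (fund k) j <= 0.
Proof.
move=> h k; rewrite wact_coord.
have := @Tmain (Lw (rcons (rev w) j)) (rcons (rev w) j) j (leqnn _).
rewrite (Lw_weq (weq_rcons_ii _ _)) -rev_cons !Lw_rev => /(_ h k).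
rewrite rev_cons ract_rcons rref_self // ract_lin ffunE.
by rewrite mul0r addr0 mulN1r oppr_ge0.
Qed.

Lemma bruhat_Lw x y : bruhat_lt C x y -> (Lw x < Lw y)%N.
Proof.
elim=> [a b [t [_ _ [kx [ky [hx hy hk]]]]] | a b c _ h1 _ h2].
  by move: hx hy => /wlenE <- /wlenE <-.
exact: ltn_trans h1 h2.
Qed.

Lemma bruhat_of w j : (Lw (j :: w) < Lw w)%N -> bruhat_lt C (j :: w) w.
Proof.
move=> h; apply: t_step; exists (rev w ++ j :: w); split.
- by exists (rev w), j; rewrite revK; exact: weq_refl.
- move=> l; rewrite cat_cons wact_cons !wact_cat wact_cons wact_rev_r sref_invol //.
- by exists (Lw (j :: w)), (Lw w); split => //; apply/wlenE.
Qed.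

Lemma Lw_cons_cases w j : Lw (j :: w) = (Lw w).+1 \/ (Lw (j :: w)).+1 = Lw w.
Proof.
rewrite -(Lw_rev (j :: w)) -(Lw_rev w) rev_cons; exact: Lw_rcons_cases.
Qed.

Lemma main_sec j g : chamber C g -> (Gamma_up C j g <-> g j <= 0).
Proof.
move=> [w [i hg]]; split.
  move=> [w' [i' [hb ->]]]; exact: key_neg (bruhat_Lw hb) i'.
move=> hj; case: (Lw_cons_cases w j) => hc.
  have h0 : g j = 0.
    have hp : (Lw w < Lw (j :: w))%N by lia.
    have := key_pos hp i; rewrite -hg; lia.
  exists (j :: w), i; split.
    apply: bruhat_of; rewrite (Lw_weq (weq_ii _ _)); lia.
  apply/ffunP => k; rewrite wact_cons ffunE -hg h0 mul0r subr0 //.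
exists w, i; split => //; apply: bruhat_of; lia.
Qed.

End Main.

Lemma sum2 n (f : 'I_n -> rat) s t : s != t ->
  (forall k, k != s -> k != t -> f k = 0) -> \sum_k f k = f s + f t.
Proof.
move=> hst H; rewrite (bigD1 s) //= (bigD1 t) /=; last by rewrite eq_sym.
rewrite big1 ?addr0 // => k /andP [hks hkt]; exact: H.
Qed.

Lemma lin_aux (R : realFieldType) (P D : R) :
  0 < 8%:R * D - 2%:R * P -> 0 <= P - D * 4%:R -> False.
Proof. move=> h1 h2; lra. Qed.

Lemma six_from n (C : 'I_n -> 'I_n -> int) (HC : finite_simple_cartan C) s t :
  s != t -> six (C t s) (C s t).
Proof.
move=> hst; case: HC => _ [C2 [Hneg [Hz [[d [hd hsym hpd]] _]]]].
have h1 : C t s <= 0 by apply: Hneg; rewrite eq_sym.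
have h2 : C s t <= 0 by apply: Hneg.
have hz := Hz t s.
have ets : (t == s) = false by rewrite eq_sym (negbTE hst).
have hp : C s t * C t s <= 3.
  case: (boolP (C s t * C t s <= 3)) => // hp4; exfalso.
  pose x : 'I_n -> rat := fun k => if k == s then - (C s t)%:~R else if k == t then 2 else 0.
  have hxt : x t != 0 by rewrite /x ets eqxx.
  have := hpd x (ex_intro _ t hxt).
  have hx0 : forall k, k != s -> k != t -> x k = 0.
    by move=> k hks hkt; rewrite /x (negbTE hks) (negbTE hkt).
  rewrite (sum2 hst); last by move=> k hks hkt; rewrite big1 // => j _; rewrite hx0 // !mul0r.
  rewrite !(sum2 hst); try by move=> k hks hkt; rewrite (hx0 k) // mulr0.
  rewrite /x ets !eqxx !C2 !intrM.
  have hdt : 0 < (d t)%:~R :> rat by rewrite ltr0z.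
  have hdt' : 0 <= (d t)%:~R :> rat by rewrite ler0z; have := hd t; lia.
  have hP : 4%:R <= (C s t)%:~R * (C t s)%:~R :> rat.
    by rewrite -intrM (_ : 4%:R = 4%:~R) // ler_int; lia.
  have hh := mulr_ge0 hdt' (introT idP (etrans (subr_ge0 _ _) hP)).
  move=> H; have e2 : (2%:~R : rat) = 2 by []; rewrite !e2 in H.
  move: H hh; set a := (C s t)%:~R; set b := (C t s)%:~R;
    set D1 := (d s)%:~R; set D2 := (d t)%:~R => H hh.
  suff E : forall z : rat, 0 < z -> z = 8%:R * D2 - 2%:R * (D2 * (a * b)) -> False.
    by apply: E H _; ring.
  move=> z hz0 ez; rewrite ez in hz0; rewrite mulrBr in hh.
  set P := D2 * (a * b) in hz0 hh.
  exact: lin_aux hz0 hh.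
case: (eqVneq (C t s) 0) => e1.
  by left; split => //; apply/hz.
have e2 : C s t <> 0 by move=> h; move/eqP: e1; apply; apply/hz.
have b1 : 0 <= C t s * (C s t + 1) by apply: mulr_le0 => //; lia.
have b2 : 0 <= C s t * (C t s + 1) by apply: mulr_le0 => //; lia.
rewrite /six.
have : C t s = -1 \/ C t s = -2 \/ C t s = -3 by lia.
case=> [e|[e|e]]; rewrite e in hp b2 *; lia.
Qed.

Unset Implicit Arguments.

Theorem lemma3p8 (n : nat) (C : 'I_n -> 'I_n -> int)
  (HC : finite_simple_cartan C) (j : 'I_n) (g : weight n) :
  chamber C g ->
  (Gamma_up C j g <-> g j <= 0) /\ (Gamma_low C j g <-> 0 < g j).
Proof.
move=> hch.
have C2 : forall i, C i i = 2 by case: HC => _ [h _].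
have HS : forall s t, s != t -> six (C t s) (C s t) := six_from HC.
have key := main_sec C2 HS j hch.
split => //; split.
  move=> [_ hn]; have : ~ (g j <= 0) by move=> h; apply: hn; apply/key.
  lia.
move=> hp; split => //; move/key; lia.
Qed.
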